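(* Let $k\ge2$, $n\ge1$ be integers, let $\bar{\mathcal{P}}\in\mathbb{R}^{[k,n]}$ be a columnwise-substochastic tensor, $\mathbf{v}\in\mathbb{R}^n$ a stochastic vector and $\alpha\in[0,1)$. If $\alpha<\frac{1}{k-1}$, then the MLPPR system $(\mathbf{e}^T\mathbf{y})^{k-2}\mathbf{y}-\alpha\bar{\mathcal{P}}\mathbf{y}^{k-1}=\mathbf{v}$ has a unique nonnegative solution $\mathbf{y}\in\mathbb{R}^n_+$.
   Context: For $\mathcal{P}\in\mathbb{R}^{[k,n]}$ (real tensors of order $k$, dimension $n$) and $\mathbf{y}\in\mathbb{R}^n$, $(\mathcal{P}\mathbf{y}^{k-1})_i=\sum_{i_2,\dots,i_k}p_{i i_2\dots i_k}y_{i_2}\cdots y_{i_k}$. $\bar{\mathcal{P}}$ is columnwise-substochastic if its entries are nonnegative and $\sum_{i}\bar p_{i i_2\dots i_k}\le1$ for all $i_2,\dots,i_k$. $\mathbf{e}$ is the all-ones vector; a stochastic vector is nonnegative with entries summing to $1$. *)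

(* Defs.v *)
From mathcomp Require Import all_boot all_order all_algebra.
From mathcomp Require Import reals.
Set Implicit Arguments. Unset Strict Implicit. Unset Printing Implicit Defensive.
Import Order.TTheory GRing.Theory Num.Theory.
Local Open Scope ring_scope.

(* A real tensor of order k and dimension n: entries p_{i i_2 ... i_k}, the
   first index i : 'I_n and the remaining k-1 indices encoded as a finite
   function idx : 'I_(k.-1) -> 'I_n  (idx j = i_{j+2}). *)
Definition tensor (R : realType) (k n : nat) :=
  'I_n -> {ffun 'I_(k.-1) -> 'I_n} -> R.

Definition tapply (R : realType) (k n : nat) (P : tensor R k n)
  (y : 'I_n -> R) (i : 'I_n) : R :=
  \sum_(idx : {ffun 'I_(k.-1) -> 'I_n}) P i idx * \prod_(j < k.-1) y (idx j).

Definition col_substochastic (R : realType) (k n : nat) (P : tensor R k n) :=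
  (forall i idx, 0 <= P i idx) /\
  (forall idx, \sum_(i < n) P i idx <= 1).

Definition stochastic (R : realType) (n : nat) (v : 'I_n -> R) :=
  (forall i, 0 <= v i) /\ \sum_(i < n) v i = 1.

Definition nonneg_vec (R : realType) (n : nat) (y : 'I_n -> R) :=
  forall i, 0 <= y i.

Definition mlppr_solution (R : realType) (k n : nat) (alpha : R)
  (P : tensor R k n) (v y : 'I_n -> R) :=
  forall i, (\sum_(j < n) y j) ^+ (k - 2) * y i - alpha * tapply P y i = v i.

(* Main.v *)
Require Import Defs.
From mathcomp Require Import all_boot all_order all_algebra.
From mathcomp Require Import reals.
Set Warnings "-notation-overridden -ambiguous-paths -notation-incompatible-prefix -redundant-canonical-projection".
From HB Require Import structures.
From mathcomp Require Import all_classical all_reals all_analysis.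
From mathcomp Require Import ring lra zify.
Import Order.TTheory GRing.Theory Num.Theory numFieldTopology.Exports numFieldNormedType.Exports.
Local Open Scope classical_set_scope.
Local Open Scope ring_scope.
Set Implicit Arguments. Unset Strict Implicit. Unset Printing Implicit Defensive.

Lemma sum_prod_ffun (R : realType) (n m : nat) (x : 'I_n -> R) :
  \sum_(idx : {ffun 'I_m -> 'I_n}) \prod_(j < m) x (idx j) = (\sum_i x i) ^+ m.
Proof.
rewrite -(bigA_distr_bigA (fun (j : 'I_m) (i : 'I_n) => x i)) /=.
by rewrite prodr_const card_ord.
Qed.

Definition tterm (R : realType) m (a b : 'I_m -> R) (j : 'I_m) :=
  \prod_(l < m) (if (l < j)%N then b l else if l == j then `|a l - b l| else a l).

Lemma prod_diff (R : realType) m (a b : 'I_m -> R) :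
  (forall l, 0 <= a l) -> (forall l, 0 <= b l) ->
  `|\prod_(l < m) a l - \prod_(l < m) b l| <= \sum_(j < m) tterm a b j.
Proof.
elim: m a b => [|m IH] a b ha hb.
  by rewrite !big_ord0 subrr normr0.
rewrite big_ord_recl [X in _ - X]big_ord_recl big_ord_recl.
rewrite /tterm big_ord_recl /=.
set A' := \prod_(i < m) a (lift ord0 i).
set B' := \prod_(i < m) b (lift ord0 i).
rewrite (eq_bigr (fun j => b ord0 * tterm (fun l => a (lift ord0 l)) (fun l => b (lift ord0 l)) j)); last first.
  move=> j _; rewrite big_ord_recl /=; congr (_ * _); rewrite /tterm.
rewrite -mulr_sumr.
have hA : 0 <= A' by apply: prodr_ge0 => i _.
have hB : 0 <= B' by apply: prodr_ge0 => i _.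
have IH' := IH (fun l => a (lift ord0 l)) (fun l => b (lift ord0 l))
  (fun l => ha _) (fun l => hb _).
have e : a ord0 * A' - b ord0 * B' = (a ord0 - b ord0) * A' + b ord0 * (A' - B').
  by ring.
rewrite e (le_trans (ler_normD _ _)) // lerD //.
  by rewrite normrM (ger0_norm hA).
by rewrite normrM (ger0_norm (hb _)) ler_wpM2l.
Qed.

Lemma sum_ffun_diff (R : realType) (n m : nat) (x z : 'I_n -> R) :
  (forall i, 0 <= x i) -> (forall i, 0 <= z i) ->
  \sum_i x i = 1 -> \sum_i z i = 1 ->
  \sum_(idx : {ffun 'I_m -> 'I_n})
     `|\prod_(j < m) x (idx j) - \prod_(j < m) z (idx j)|
  <= m%:R * \sum_i `|x i - z i|.
Proof.
move=> hx hz sx sz.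
apply: (@le_trans _ _ (\sum_(idx : {ffun 'I_m -> 'I_n}) \sum_(j < m)
     tterm (fun l => x (idx l)) (fun l => z (idx l)) j)).
  apply: ler_sum => idx _.
  by apply: prod_diff.
rewrite exchange_big /=.
rewrite (eq_bigr (fun _ => \sum_i `|x i - z i|)); last first.
  move=> j _.
  pose G (l : 'I_m) (i : 'I_n) := if (l < j)%N then z i
     else if l == j then `|x i - z i| else x i.
  have -> : \sum_(idx : {ffun 'I_m -> 'I_n}) tterm (fun l => x (idx l)) (fun l => z (idx l)) j
     = \sum_(idx : {ffun 'I_m -> 'I_n}) \prod_(l < m) G l (idx l).
    by [].
  rewrite -(bigA_distr_bigA G) /= (bigD1 j) //= [X in _ * X]big1 ?mulr1.
    by apply: eq_bigr => i _; rewrite /G ltnn eqxx.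
  move=> l lj; rewrite /G (negbTE lj).
  by case: (l < j)%N; [rewrite sz | rewrite sx].
by rewrite sumr_const card_ord mulr_natl.
Qed.

Definition simplex (R : realType) n (x : 'I_n -> R) :=
  (forall i, 0 <= x i) /\ \sum_i x i = 1.

Definition Fmap (R : realType) k n (P : tensor R k n) (v : 'I_n -> R) (alpha : R)
  (x : 'I_n -> R) : 'I_n -> R :=
  fun i => (1 - alpha * \sum_l tapply P x l) * v i + alpha * tapply P x i.

Lemma csumE (R : realType) k n (P : tensor R k n) x :
  \sum_l tapply P x l =
  \sum_(idx : {ffun 'I_k.-1 -> 'I_n}) (\sum_l P l idx) * \prod_(j < k.-1) x (idx j).
Proof.
rewrite /tapply exchange_big /=; apply: eq_bigr => idx _.
by rewrite mulr_suml.
Qed.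

Lemma tapply_ge0 (R : realType) k n (P : tensor R k n) x i :
  col_substochastic P -> (forall i, 0 <= x i) -> 0 <= tapply P x i.
Proof.
move=> [hP _] hx; apply: sumr_ge0 => idx _; apply: mulr_ge0 => //.
by apply: prodr_ge0.
Qed.

Lemma csum_bounds (R : realType) k n (P : tensor R k n) x :
  col_substochastic P -> simplex x ->
  0 <= \sum_l tapply P x l <= 1.
Proof.
move=> hP [hx sx]; apply/andP; split.
  by apply: sumr_ge0 => l _; apply: tapply_ge0.
rewrite csumE.
apply: (@le_trans _ _ (\sum_(idx : {ffun 'I_k.-1 -> 'I_n}) \prod_(j < k.-1) x (idx j))); last first.
  by rewrite sum_prod_ffun sx expr1n.
apply: ler_sum => idx _.
rewrite -[leRHS]mul1r; apply: ler_wpM2r; first by apply: prodr_ge0.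
by case: hP => _ ->.
Qed.

Lemma F_simplex (R : realType) k n (P : tensor R k n) v alpha x :
  col_substochastic P -> stochastic v -> 0 <= alpha -> alpha < 1 ->
  simplex x -> simplex (Fmap P v alpha x).
Proof.
move=> hP [hv sv] a0 a1 hx.
have /andP[c0 c1] := csum_bounds hP hx.
have t0 : 0 <= 1 - alpha * \sum_l tapply P x l.
  rewrite subr_ge0; apply: (le_trans (ler_wpM2l a0 c1)); lra.
split.
  move=> i; rewrite /Fmap; apply: addr_ge0; first exact: mulr_ge0.
  by apply: mulr_ge0 => //; apply: tapply_ge0 => //; case: hx.
rewrite /Fmap big_split /= -mulr_sumr -mulr_sumr sv; ring.
Qed.

Definition Qt (R : realType) k n (P : tensor R k n) (v : 'I_n -> R) i idx :=
  P i idx + v i * (1 - \sum_l P l idx).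

Lemma F_alt (R : realType) k n (P : tensor R k n) v alpha x i :
  simplex x ->
  Fmap P v alpha x i =
  alpha * \sum_(idx : {ffun 'I_k.-1 -> 'I_n}) Qt P v i idx * \prod_(j < k.-1) x (idx j)
  + (1 - alpha) * v i.
Proof.
move=> [hx sx].
have e1 : \sum_(idx : {ffun 'I_k.-1 -> 'I_n}) \prod_(j < k.-1) x (idx j) = 1.
  by rewrite sum_prod_ffun sx expr1n.
have -> : \sum_(idx : {ffun 'I_k.-1 -> 'I_n}) Qt P v i idx * \prod_(j < k.-1) x (idx j)
  = tapply P x i + v i * (1 - \sum_l tapply P x l).
  rewrite csumE /tapply -[in X in v i * (X - _)]e1 mulrBr !mulr_sumr -sumrB -big_split /=.
  apply: eq_bigr => idx _; rewrite /Qt; ring.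
rewrite /Fmap; ring.
Qed.

Lemma F_lip (R : realType) k n (P : tensor R k n) v alpha x z :
  col_substochastic P -> stochastic v -> 0 <= alpha ->
  simplex x -> simplex z ->
  \sum_i `|Fmap P v alpha x i - Fmap P v alpha z i|
  <= alpha * k.-1%:R * \sum_i `|x i - z i|.
Proof.
move=> [hP hP1] [hv sv] a0 hx hz.
have Q0 : forall i idx, 0 <= Qt P v i idx.
  move=> i idx; rewrite /Qt; apply: addr_ge0 => //; apply: mulr_ge0 => //.
  by rewrite subr_ge0.
have Q1 : forall idx, \sum_i Qt P v i idx = 1.
  move=> idx; rewrite /Qt big_split /= -mulr_suml sv; ring.
rewrite -mulrA.
apply: (@le_trans _ _ (alpha * \sum_(idx : {ffun 'I_k.-1 -> 'I_n})
     `|\prod_(j < k.-1) x (idx j) - \prod_(j < k.-1) z (idx j)|)); last first.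
  apply: ler_wpM2l => //; apply: sum_ffun_diff; by [case: hx|case: hz].
apply: (@le_trans _ _ (\sum_i alpha * \sum_(idx : {ffun 'I_k.-1 -> 'I_n})
     Qt P v i idx * `|\prod_(j < k.-1) x (idx j) - \prod_(j < k.-1) z (idx j)|)).
  apply: ler_sum => i _.
  rewrite (F_alt _ _ _ _ hx) (F_alt _ _ _ _ hz).
  have -> : forall a b c : R, a + c - (b + c) = a - b by move=> *; ring.
  rewrite -mulrBr normrM (ger0_norm a0) ler_wpM2l //.
  rewrite -sumrB; apply: (le_trans (ler_norm_sum _ _ _)).
  apply: ler_sum => idx _; rewrite -mulrBr normrM ger0_norm //.
rewrite -mulr_sumr ler_wpM2l // exchange_big /=.
apply: ler_sum => idx _; rewrite -mulr_suml Q1 mul1r //.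
Qed.

Definition rowv (R : realType) n := 'rV[R]_n.
HB.instance Definition _ (R : realType) n := NormedModule.copy (rowv R n) 'rV[R]_n.
HB.instance Definition _ (R : realType) n := Complete.copy (rowv R n) 'rV[R]_n.

Lemma rowv_norm_le (R : realType) n (w : rowv R n) i : `|w ord0 i| <= `|w|.
Proof.
change (`|w ord0 i| <= mx_norm (w : 'rV[R]_n)); rewrite mx_normrE.
apply: (le_trans _ (le_bigmax _ _ (ord0, i))) => //=.
Qed.

Lemma rowv_norm_sum (R : realType) n (w : rowv R n) : `|w| <= \sum_i `|w ord0 i|.
Proof.
change (mx_norm (w : 'rV[R]_n) <= \sum_i `|w ord0 i|); rewrite mx_normrE.
apply: bigmax_le; first by apply: sumr_ge0.
move=> [a b] _ /=; rewrite (ord1 a).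
by rewrite (bigD1 b) //= lerDl sumr_ge0.
Qed.

Lemma geom_small (R : realType) (q c : R) :
  0 <= q -> q < 1 -> exists N, q ^+ N * c < 1.
Proof.
move=> q0 q1.
have [->|qn0] := eqVneq q 0; first by exists 1%N; rewrite expr1 mul0r.
have qp : 0 < q by rewrite lt_def qn0.
set d := q^-1 - 1.
have dp : 0 < d by rewrite /d subr_gt0 invf_gt1.
have bern0 : forall N, 1 + N%:R * d <= (1 + d) ^+ N.
  elim=> [|N IH]; first by rewrite mul0r addr0 expr0.
  rewrite exprS -natr1.
  have hN : 0 <= N%:R :> R by [].
  nra.
have bern : forall N, 1 + N%:R * d <= q^-1 ^+ N.
  by move=> N; have -> : q^-1 = 1 + d by rewrite /d; ring.

have c0 : 0 <= `|c| by [].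
exists (Num.bound (`|c| / d)).
have hb := archi_boundP (divr_ge0 c0 (ltW dp)).
set N := Num.bound _ in hb *.
have : `|c| < N%:R * d by rewrite -ltr_pdivrMr.
move=> h1.
have h2 : `|c| < q^-1 ^+ N by apply: (lt_le_trans h1); apply: le_trans (bern N); lra.
have qN : 0 < q ^+ N by apply: exprn_gt0.
rewrite exprVn in h2.
apply: (@le_lt_trans _ _ (q ^+ N * `|c|)).
  by apply: ler_wpM2l; [exact: ltW | exact: ler_norm].
by rewrite -[X in _ < X](mulfV (lt0r_neq0 qN)) ltr_pM2l.
Qed.

Lemma sum_continuous (R : realType) n (I : Type) (r : seq I) (f : I -> 'rV[R]_n -> R) :
  (forall j, continuous (f j)) -> continuous (fun w => \sum_(j <- r) f j w).
Proof.
move=> hf; elim: r => [|a r IH].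
  by under eq_fun do rewrite big_nil; exact: cst_continuous.
under eq_fun do rewrite big_cons.
move=> w; exact: (continuousD (hf a w) (IH w)).
Qed.

Lemma closed_simplex (R : realType) n :
  closed [set w : 'rV[R]_n | simplex (fun i => w ord0 i)].
Proof.
have -> : [set w : 'rV[R]_n | simplex (fun i => w ord0 i)] =
  (\bigcap_(i in [set: 'I_n]) ((fun w : 'rV[R]_n => w ord0 i) @^-1` [set r : R | 0 <= r]))
  `&` ((fun w : 'rV[R]_n => \sum_i w ord0 i) @^-1` [set r : R | r = 1]).
  apply/seteqP; split.
    by move=> w [h1 h2]; split => //= i _; exact: h1.
  by move=> w [h1 h2]; split => //= i; exact: h1.
apply: closedI.
  apply: closed_bigI => i _; apply: preimage_closed; last exact: closed_ge.
  by move=> w _; exact: (@coord_continuous R 1 n ord0 i).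
apply: preimage_closed; last exact: closed_eq.
move=> w _; apply: sum_continuous => i; exact: (@coord_continuous R 1 n ord0 i).
Qed.

Lemma exists_fixed (R : realType) k n (P : tensor R k n) (v : 'I_n -> R) (alpha : R) :
  col_substochastic P -> stochastic v -> 0 <= alpha -> alpha < 1 ->
  alpha * k.-1%:R < 1 ->
  exists x, simplex x /\ Fmap P v alpha x = x.
Proof.
move=> hP hv a0 a1 aq.
set q := alpha * k.-1%:R.
have q0 : 0 <= q by apply: mulr_ge0.
have [N hN] := geom_small n%:R q0 aq.
pose toF (w : rowv R n) := fun i => w ord0 i.
pose Fr (w : rowv R n) : rowv R n := \row_i Fmap P v alpha (toF w) i.
pose U := [set w : rowv R n | simplex (toF w)].
have toFr : forall w, toF (Fr w) = Fmap P v alpha (toF w).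
  by move=> w; apply/funext => i; rewrite /toF /Fr mxE.
have FrU : forall w, U w -> U (Fr w).
  move=> w Uw; rewrite /U /= toFr; exact: F_simplex.
have GU : forall M w, U w -> U (iter M Fr w).
  by elim=> [|M IH] w Uw //=; apply: FrU; apply: IH.
have Glip : forall M w z, U w -> U z ->
    \sum_i `|toF (iter M Fr w) i - toF (iter M Fr z) i|
    <= q ^+ M * \sum_i `|toF w i - toF z i|.
  elim=> [|M IH] w z Uw Uz; first by rewrite expr0 mul1r.
  rewrite /= !toFr exprS -mulrA.
  apply: (le_trans (@F_lip _ _ _ P v alpha _ _ hP hv a0 (GU M w Uw) (GU M z Uz))).
  by rewrite -/q; apply: ler_wpM2l => //; apply: IH.
have GUh : {homo iter N Fr : w / U w >-> U w} by move=> w; apply: GU.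
pose G := mkfun_fun GUh.
have hq'0 : 0 <= q ^+ N * n%:R by apply: mulr_ge0; [exact: exprn_ge0|].
have ctr : is_contraction G.
  exists (NngNum hq'0); split => //=.
  rewrite /dominated_by /globally /=; move=> [a b] [Ua Ub] /=; rewrite /self_sub /mkfun /=.
  apply: (le_trans (rowv_norm_sum _)).
  have -> : \sum_i `|(iter N Fr a - iter N Fr b) ord0 i|
     = \sum_i `|toF (iter N Fr a) i - toF (iter N Fr b) i|.
    by apply: eq_bigr => i _; rewrite !mxE.
  apply: (le_trans (Glip N a b Ua Ub)).
  rewrite -mulrA; apply: ler_wpM2l; first exact: exprn_ge0.
  apply: (@le_trans _ _ (\sum_(i < n) `|a - b|)).
    apply: ler_sum => i _.
    have := rowv_norm_le (a - b) i; rewrite !mxE.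
    by [].
  by rewrite big_const_ord iter_addr addr0 mulr_natl.
have Uv : U (\row_i v i).
  rewrite /U /toF /=; case: hv => h1 h2; split.
    by move=> i; rewrite mxE.
  by rewrite -h2; apply: eq_bigr => i _; rewrite mxE.
have [p Up pG] := banach_fixed_point ctr (@closed_simplex R n) (ex_intro _ _ Uv).
have fix1 : Fr p = p.
  apply: (contraction_fixpoint_unique ctr (FrU p Up) Up) => //=.
  rewrite /mkfun -iterSr iterS; congr Fr; exact: pG.
exists (toF p); split => //.
by rewrite -toFr fix1.
Qed.

Unset Implicit Arguments.
Lemma fixed_unique (R : realType) k n (P : tensor R k n) v alpha x z :
  col_substochastic P -> stochastic v -> 0 <= alpha -> alpha * k.-1%:R < 1 ->
  simplex x -> simplex z -> Fmap P v alpha x = x -> Fmap P v alpha z = z -> x = z.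
Proof.
move=> hP hv a0 aq sx sz fx fz.
have h := @F_lip _ _ _ P v alpha _ _ hP hv a0 sx sz.
rewrite fx fz in h.
have s0 : 0 <= \sum_i `|x i - z i| by apply: sumr_ge0.
have e : \sum_i `|x i - z i| = 0 by nra.
apply/funext => i; apply/eqP; rewrite -subr_eq0 -normr_eq0; apply/eqP.
by move/psumr_eq0P: e => ->.
Qed.

Lemma tapplyZ (R : realType) k n (P : tensor R k n) (s : R) x i :
  tapply P (fun j => s * x j) i = s ^+ k.-1 * tapply P x i.
Proof.
rewrite /tapply mulr_sumr; apply: eq_bigr => idx _.
by rewrite big_split /= prodr_const card_ord; ring.
Qed.

Theorem corollary3p16 (R : realType) (k n : nat) (P : tensor R k n)
  (v : 'I_n -> R) (alpha : R) :
  (2 <= k)%N -> (1 <= n)%N ->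
  col_substochastic P -> stochastic v ->
  0 <= alpha -> alpha < 1 ->
  alpha < (k.-1%:R)^-1 ->
  exists! y : 'I_n -> R, nonneg_vec y /\ mlppr_solution alpha P v y.
Proof.
move=> hk hn hP hv a0 a1 am.
have m0 : (0 < k.-1)%N by lia.
have hkm : (k - 2).+1 = k.-1 by lia.
have mR : 0 < k.-1%:R :> R by rewrite ltr0n.
have aq : alpha * k.-1%:R < 1 by rewrite -ltr_pdivlMr // mul1r.
have [x [sx fx]] := exists_fixed hP hv a0 a1 aq.
set c := \sum_l tapply P x l.
set t := 1 - alpha * c.
have /andP[c0 c1] := csum_bounds hP sx.
have t0 : 0 < t by rewrite /t subr_gt0; apply: (le_lt_trans (ler_wpM2l a0 c1)); lra.
set s := t^-1 `^ (k.-1%:R)^-1.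
have s0 : 0 <= s by apply: powR_ge0.
have sm : s ^+ k.-1 = t^-1.
  rewrite /s -powR_mulrn ?powR_ge0 // -powRrM mulVf ?gt_eqF // powRr1 //.
  by rewrite invr_ge0 ltW.
exists (fun i => s * x i); split.
  split; first by move=> i; apply: mulr_ge0 => //; case: sx.
  move=> i; rewrite -mulr_sumr (proj2 sx) mulr1 tapplyZ.
  have e : x i - alpha * tapply P x i = t * v i.
    rewrite -{1}fx /Fmap /t /c; ring.
  rewrite mulrA -exprSr hkm [alpha * _]mulrCA -mulrBr e mulrA sm mulVf ?gt_eqF // mul1r.
  by [].
move=> y [hy ey].
set sy := \sum_i y i.
have ey' : forall i, sy ^+ (k - 2) * y i - alpha * tapply P y i = v i by [].
have tap0 : forall z : 'I_n -> R, (forall i, z i = 0) -> forall i, tapply P z i = 0.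
  move=> z hz i; rewrite /tapply big1 // => idx _.
  by rewrite (bigD1 (Ordinal m0)) //= hz mul0r mulr0.
have sy0 : 0 < sy.
  rewrite lt_def sumr_ge0 ?andbT; last by move=> i _; exact: hy.
  apply/negP => /eqP h0.
  have yz : forall i, y i = 0.
    by move=> i; apply: (psumr_eq0P _ h0) => // j _; exact: hy.
  have vz : forall i, v i = 0.
    by move=> i; rewrite -ey' yz (tap0 y yz) !mulr0 subr0.
  case: hv => _; rewrite big1 => [/eqP|i _]; [by rewrite eq_sym oner_eq0 | exact: vz].
set xy := fun i => y i / sy.
have yfun : y = (fun i => sy * xy i).
  by apply/funext => i; rewrite /xy mulrC divfK ?gt_eqF.
have sxy : simplex xy.
  split; first by move=> i; rewrite /xy divr_ge0 // ltW.
  by rewrite /xy -mulr_suml -/sy mulfV ?gt_eqF.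
have eq2 : forall i, sy ^+ k.-1 * (xy i - alpha * tapply P xy i) = v i.
  move=> i; rewrite -ey'; rewrite [in RHS]yfun tapplyZ -hkm exprSr.
  set e := sy ^+ (k - 2); set D := tapply P xy i; set w := xy i; ring.
have sum2 : sy ^+ k.-1 * (1 - alpha * \sum_l tapply P xy l) = 1.
  rewrite -[RHS](proj2 hv) -(eq_bigr _ (fun i _ => eq2 i)) -mulr_sumr sumrB -mulr_sumr.
  by rewrite (proj2 sxy).
have fxy : Fmap P v alpha xy = xy.
  apply/funext => i; rewrite /Fmap -eq2 mulrA (mulrC (1 - _)) sum2 mul1r.
  set D := tapply P xy i; set w := xy i; ring.
have xyx : xy = x := @fixed_unique R k n P v alpha xy x hP hv a0 aq sxy sx fxy fx.
have sye : sy = s.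
  have h1 : sy ^+ k.-1 * t = 1 by rewrite /t /c -xyx.
  have h2 : sy ^+ k.-1 = s ^+ k.-1.
    by rewrite sm -[sy ^+ _](mulfK (lt0r_neq0 t0)) h1 mul1r.
  by apply: (pexpIrn m0); rewrite ?nnegrE ?s0 ?(ltW sy0).
by rewrite yfun xyx sye.
Qed.
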